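(* Let $n_0\in C^1(\Omega,\mathbb S^2)$ with $n_0\ne-e_3$, and suppose $n_0$ is conformal. Let $\rho_0=-B_0^{-1}b_0$ with $B_0,b_0$ as in the context. Then $\rho_0\cdot e_1=\rho_0\cdot e_2=0$ (so $R_{n_0}V_{\rho_0}R_{n_0}^t$ is a multiple of $n_0\otimes n_0-\frac13I$, i.e. no biaxiality at this order), and $$\int_\Omega\tfrac12B_0\rho_0\cdot\rho_0+b_0\cdot\rho_0=-\frac{3s_+^2}{\nu}\int_\Omega|\nabla n_0|^4.$$
   Context: $a,b,c>0$, $s_+=\frac{b^2+\sqrt{b^4+24a^2c^2}}{4c^2}$, $\mu=b^2s_+$, $\nu=\frac13b^2s_++2a^2$, $B_0=\mathrm{diag}(\mu,\mu,\nu)$. $F_1=\frac1{\sqrt2}(e_1\otimes e_1-e_2\otimes e_2)$, $F_2=\frac1{\sqrt2}(e_1\otimes e_2+e_2\otimes e_1)$, $F_3=\sqrt{\frac32}(e_3\otimes e_3-\frac13I)$; $V_\rho=\sum_{j=1}^3\rho_jF_j$. For $n\ne-e_3$, $R_n=I+[e_3\times n]_\times+\frac{[e_3\times n]_\times^2}{1+n\cdot e_3}$ with $[\omega]_\times v=\omega\times v$. $\nabla n\otimes\nabla n=\sum_{i=1}^2\partial_in\otimes\partial_in$, and $b_0\cdot e_j=-2s_+(\nabla n_0\otimes\nabla n_0):(R_{n_0}F_jR_{n_0}^t)$ for $j=1,2$, $b_0\cdot e_3=\sqrt6\,s_+|\nabla n_0|^2$, with $A:B=\mathrm{tr}(A^tB)$.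 $n$ is conformal if $\partial_2n=\sigma\,n\times\partial_1n$ with $\sigma\equiv\pm1$ constant; $\Omega\subset\mathbb R^2$ bounded and $|\nabla n_0|\in L^4(\Omega)$. *)

(* Defs.v *)
From Stdlib Require Import Reals Lra.
Open Scope R_scope.

(* Vectors of R^3 and 3x3 matrices, indexed by 0,1,2 (component k <-> e_{k+1}). *)
Definition vec := nat -> R.
Definition mat := nat -> nat -> R.

Definition sum3 (f : nat -> R) : R := f 0%nat + f 1%nat + f 2%nat.

Definition vdot (u v : vec) : R := sum3 (fun i => u i * v i).
Definition vnorm2 (u : vec) : R := vdot u u.

Definition e (i : nat) : vec := fun k => if Nat.eqb k i then 1 else 0.
Definition e1 : vec := e 0.
Definition e2 : vec := e 1.
Definition e3 : vec := e 2.

Definition cross (u v : vec) : vec := fun k =>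
  match k with
  | 0%nat => u 1%nat * v 2%nat - u 2%nat * v 1%nat
  | 1%nat => u 2%nat * v 0%nat - u 0%nat * v 2%nat
  | 2%nat => u 0%nat * v 1%nat - u 1%nat * v 0%nat
  | _ => 0
  end.

Definition Idm : mat := fun i j => if Nat.eqb i j then 1 else 0.
Definition madd (A B : mat) : mat := fun i j => A i j + B i j.
Definition mscale (c : R) (A : mat) : mat := fun i j => c * A i j.
Definition mmul (A B : mat) : mat := fun i j => sum3 (fun k => A i k * B k j).
Definition mtr (A : mat) : mat := fun i j => A j i.
Definition outer (u v : vec) : mat := fun i j => u i * v j.
Definition mvec (A : mat) (v : vec) : vec := fun i => sum3 (fun k => A i k * v k).
Definition frob (A B : mat) : R := sum3 (fun i => sum3 (fun j => A i j * B i j)).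

(* [w]_x, the matrix with [w]_x v = w x v (column j is w x e_j) *)
Definition skew (w : vec) : mat := fun i j => cross w (e j) i.

Definition Rn (n : vec) : mat :=
  madd (madd Idm (skew (cross e3 n)))
       (mscale (/ (1 + vdot n e3)) (mmul (skew (cross e3 n)) (skew (cross e3 n)))).

Definition F1 : mat := mscale (/ sqrt 2) (madd (outer e1 e1) (mscale (-1) (outer e2 e2))).
Definition F2 : mat := mscale (/ sqrt 2) (madd (outer e1 e2) (outer e2 e1)).
Definition F3 : mat := mscale (sqrt (3 / 2)) (madd (outer e3 e3) (mscale (- (1 / 3)) Idm)).

Definition Fj (j : nat) : mat :=
  match j with 0%nat => F1 | 1%nat => F2 | _ => F3 end.

Definition Vrho (rho : vec) : mat := fun i j => sum3 (fun k => rho k * Fj k i j).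

Definition splus (a b c : R) : R := (b ^ 2 + sqrt (b ^ 4 + 24 * a ^ 2 * c ^ 2)) / (4 * c ^ 2).
Definition mu (a b c : R) : R := b ^ 2 * splus a b c.
Definition nu (a b c : R) : R := 1 / 3 * b ^ 2 * splus a b c + 2 * a ^ 2.

Definition B0 (a b c : R) : mat := fun i j =>
  if Nat.eqb i j then
    match i with 0%nat => mu a b c | 1%nat => mu a b c | _ => nu a b c end
  else 0.

(* grad n given by its two partial derivatives d1 = d_1 n, d2 = d_2 n *)
Definition gradnorm2 (d1 d2 : vec) : R := vnorm2 d1 + vnorm2 d2.
Definition gradtensor (d1 d2 : vec) : mat := madd (outer d1 d1) (outer d2 d2).

(* b_0 at a point, for s = s_+, n = n_0, d1,d2 = partial derivatives of n_0 *)
Definition b0vec (s : R) (n d1 d2 : vec) : vec := fun k =>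
  match k with
  | 0%nat => -2 * s * frob (gradtensor d1 d2) (mmul (mmul (Rn n) F1) (mtr (Rn n)))
  | 1%nat => -2 * s * frob (gradtensor d1 d2) (mmul (mmul (Rn n) F2) (mtr (Rn n)))
  | 2%nat => sqrt 6 * s * gradnorm2 d1 d2
  | _ => 0
  end.

Definition open2 (Om : R -> R -> Prop) : Prop :=
  forall x y, Om x y -> exists r, r > 0 /\
    forall x' y', (x' - x) ^ 2 + (y' - y) ^ 2 < r ^ 2 -> Om x' y'.

Definition bounded2 (Om : R -> R -> Prop) : Prop :=
  exists M, forall x y, Om x y -> x ^ 2 + y ^ 2 <= M.

Definition cont2_on (Om : R -> R -> Prop) (f : R -> R -> R) : Prop :=
  forall x y, Om x y -> forall eps, eps > 0 -> exists delta, delta > 0 /\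
    forall x' y', Om x' y' -> (x' - x) ^ 2 + (y' - y) ^ 2 < delta ^ 2 ->
      Rabs (f x' y' - f x y) < eps.

Definition C1_S2_on (Om : R -> R -> Prop) (n d1 d2 : R -> R -> vec) : Prop :=
  (forall x y, Om x y -> vnorm2 (n x y) = 1) /\
  forall k, (k < 3)%nat ->
    cont2_on Om (fun x y => n x y k) /\
    cont2_on Om (fun x y => d1 x y k) /\
    cont2_on Om (fun x y => d2 x y k) /\
    (forall x y, Om x y ->
       derivable_pt_lim (fun t => n t y k) x (d1 x y k) /\
       derivable_pt_lim (fun t => n x t k) y (d2 x y k)).

Definition conformal (Om : R -> R -> Prop) (n d1 d2 : R -> R -> vec) : Prop :=
  exists sigma, (sigma = 1 \/ sigma = -1) /\
    forall x y, Om x y -> forall k, (k < 3)%nat ->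
      d2 x y k = sigma * cross (n x y) (d1 x y) k.

(* Abstract integral over Omega: a functional I on an integrable class,
   local (depends only on values on Omega) and homogeneous on integrable
   functions.  The Lebesgue integral over Omega on L^1(Omega) is an instance. *)
Definition IsIntegralOn (Om : R -> R -> Prop)
    (Integrable : (R -> R -> R) -> Prop) (I : (R -> R -> R) -> R) : Prop :=
  (forall f g, (forall x y, Om x y -> f x y = g x y) ->
      (Integrable f -> Integrable g) /\ I f = I g) /\
  (forall (cst : R) f, Integrable f ->
      Integrable (fun x y => cst * f x y) /\ I (fun x y => cst * f x y) = cst * I f).

(* Main.v *)
Require Import Defs.
From Stdlib Require Import Reals Lra Lia.
Open Scope R_scope.

Ltac unf := cbv [frob gradtensor mmul mtr F1 F2 F3 Fj Vrho madd mscale outer skew sum3 cross Idm e1 e2 e3 e vdot vnorm2 mvec Nat.eqb].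

Lemma Rn_entries (n : vec) (q : R) (hq : q = / (1 + n 2%nat)) :
  let x := n 0%nat in let y := n 1%nat in let z := n 2%nat in
  Rn n 0%nat 0%nat = 1 - q*x^2 /\ Rn n 1%nat 0%nat = -q*x*y /\ Rn n 2%nat 0%nat = -x /\
  Rn n 0%nat 1%nat = -q*x*y /\ Rn n 1%nat 1%nat = 1 - q*y^2 /\ Rn n 2%nat 1%nat = -y /\
  Rn n 0%nat 2%nat = x /\ Rn n 1%nat 2%nat = y /\ Rn n 2%nat 2%nat = 1 - q*(x^2+y^2).
Proof.
  intros x y z. unfold Rn. unf.
  replace (n 0%nat * 0 + n 1%nat * 0 + n 2%nat * 1) with (n 2%nat) by ring.
  rewrite <- hq. subst x y z.
  repeat split; ring.
Qed.

Lemma frobF (j : nat) (hj : (j < 2)%nat) (n d1 d2 : vec) (u v sg : R)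
  (hx : n 0%nat = 2*u/(1+u^2+v^2)) (hy : n 1%nat = 2*v/(1+u^2+v^2))
  (hz : n 2%nat = (1-u^2-v^2)/(1+u^2+v^2))
  (hsg : sg = 1 \/ sg = -1)
  (hd : forall k, (k < 3)%nat -> d2 k = sg * cross n d1 k) :
  frob (gradtensor d1 d2) (mmul (mmul (Rn n) (Fj j)) (mtr (Rn n))) = 0.
Proof.
  assert (h0 := hd 0%nat ltac:(auto)); assert (h1 := hd 1%nat ltac:(auto)); assert (h2 := hd 2%nat ltac:(auto)).
  cbv [cross] in h0, h1, h2.
  assert (HS : 1 + u^2+v^2 <> 0) by nra.
  assert (sqrt 2 <> 0) by (apply Rgt_not_eq, sqrt_lt_R0; lra).
  destruct (Rn_entries n (/ (1 + n 2%nat)) eq_refl) as (r00&r10&r20&r01&r11&r21&r02&r12&r22).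
  assert (hz2 : 1 + n 2%nat = 2/(1+u^2+v^2)) by (rewrite hz; field; auto).
  assert (hz1 : 1 + n 2%nat <> 0) by (rewrite hz2; apply Rgt_not_eq, Rdiv_lt_0_compat; nra).
  assert (j = 0%nat \/ j = 1%nat) as [-> | ->] by lia;
  unf; rewrite r00,r10,r20,r01,r11,r21,r02,r12,r22, h0, h1, h2;
  replace (/ (1 + n 2%nat)) with ((1+u^2+v^2)/2) by (rewrite hz2; field; auto);
  rewrite hx, hy, hz;
  destruct hsg; subst sg; field; auto.
Qed.

Lemma Vrho_lem (n rho : vec) (u v : R)
  (hx : n 0%nat = 2*u/(1+u^2+v^2)) (hy : n 1%nat = 2*v/(1+u^2+v^2))
  (hz : n 2%nat = (1-u^2-v^2)/(1+u^2+v^2))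
  (hr0 : rho 0%nat = 0) (hr1 : rho 1%nat = 0) :
  forall i j, (i < 3)%nat -> (j < 3)%nat ->
       mmul (mmul (Rn n) (Vrho rho)) (mtr (Rn n)) i j
         = (rho 2%nat * sqrt (3/2)) * (outer n n i j - 1 / 3 * Idm i j).
Proof.
  assert (sqrt 2 <> 0) by (apply Rgt_not_eq, sqrt_lt_R0; lra).
  assert (HS : 1 + u^2+v^2 <> 0) by nra.
  destruct (Rn_entries n (/ (1 + n 2%nat)) eq_refl) as (r00&r10&r20&r01&r11&r21&r02&r12&r22).
  assert (hz2 : 1 + n 2%nat = 2/(1+u^2+v^2)) by (rewrite hz; field; auto).
  assert (hz1 : 1 + n 2%nat <> 0) by (rewrite hz2; apply Rgt_not_eq, Rdiv_lt_0_compat; nra).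
  intros i j hi hj.
  assert (i = 0%nat \/ i = 1%nat \/ i = 2%nat) as [-> | [-> | ->]] by lia;
  assert (j = 0%nat \/ j = 1%nat \/ j = 2%nat) as [-> | [-> | ->]] by lia;
  unf; rewrite ?r00,?r10,?r20,?r01,?r11,?r21,?r02,?r12,?r22, hr0, hr1;
  replace (/ (1 + n 2%nat)) with ((1+u^2+v^2)/2) by (rewrite hz2; field; auto);
  rewrite ?hx, ?hy, ?hz; field; split; auto.
Qed.

Lemma stereo (n : vec) (hn : vnorm2 n = 1)
  (hne : ~ (forall k, (k < 3)%nat -> n k = - e3 k)) :
  exists u v, n 0%nat = 2*u/(1+u^2+v^2) /\ n 1%nat = 2*v/(1+u^2+v^2) /\
    n 2%nat = (1-u^2-v^2)/(1+u^2+v^2).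
Proof.
  cbv [vnorm2 vdot sum3] in hn.
  set (x := n 0%nat) in *; set (y := n 1%nat) in *; set (z := n 2%nat) in *.
  assert (hD : 1 + z <> 0).
  { intro Hc. apply hne. intros k hk.
    assert (x = 0 /\ y = 0) as [hx0 hy0] by (split; nra).
    assert (k = 0%nat \/ k = 1%nat \/ k = 2%nat) as [-> | [-> | ->]] by lia;
      cbv [e3 e Nat.eqb]; fold x y z; lra. }
  exists (x / (1+z)), (y / (1+z)).
  assert (HS : 1 + (x/(1+z))^2 + (y/(1+z))^2 = 2/(1+z)).
  { assert (E : 1 + (x/(1+z))^2 + (y/(1+z))^2 - 2/(1+z)
       = ((1+z)^2 + x^2 + y^2 - 2*(1+z)) / (1+z)^2) by (field; auto).
    replace ((1+z)^2 + x^2 + y^2 - 2*(1+z)) with 0 in E by nra.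
    rewrite Rdiv_0_l in E. lra. }
  replace (1 - (x/(1+z))^2 - (y/(1+z))^2) with (2 - 2/(1+z)) by lra.
  rewrite HS. repeat split; field; auto.
Qed.

Theorem mainTheorem9
  (a b c : R) (ha : 0 < a) (hb : 0 < b) (hc : 0 < c)
  (Omega : R -> R -> Prop) (hopen : open2 Omega) (hbdd : bounded2 Omega)
  (n0 d1n0 d2n0 : R -> R -> vec)
  (hC1 : C1_S2_on Omega n0 d1n0 d2n0)
  (hne : forall x y, Omega x y -> ~ (forall k, (k < 3)%nat -> n0 x y k = - e3 k))
  (hconf : conformal Omega n0 d1n0 d2n0)
  (Integrable : (R -> R -> R) -> Prop) (I : (R -> R -> R) -> R)
  (hI : IsIntegralOn Omega Integrable I)
  (hL4 : Integrable (fun x y => (gradnorm2 (d1n0 x y) (d2n0 x y)) ^ 2))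
  (rho0 : R -> R -> vec)
  (hrho : forall x y, Omega x y -> forall i, (i < 3)%nat ->
     mvec (B0 a b c) (rho0 x y) i
       = - b0vec (splus a b c) (n0 x y) (d1n0 x y) (d2n0 x y) i) :
  (forall x y, Omega x y ->
     rho0 x y 0%nat = 0 /\ rho0 x y 1%nat = 0 /\
     exists lam, forall i j, (i < 3)%nat -> (j < 3)%nat ->
       mmul (mmul (Rn (n0 x y)) (Vrho (rho0 x y))) (mtr (Rn (n0 x y))) i j
         = lam * (outer (n0 x y) (n0 x y) i j - 1 / 3 * Idm i j)) /\
  I (fun x y =>
       1 / 2 * vdot (mvec (B0 a b c) (rho0 x y)) (rho0 x y)
       + vdot (b0vec (splus a b c) (n0 x y) (d1n0 x y) (d2n0 x y)) (rho0 x y))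
  = - (3 * (splus a b c) ^ 2 / nu a b c)
      * I (fun x y => (gradnorm2 (d1n0 x y) (d2n0 x y)) ^ 2).
Proof.
  set (s := splus a b c).
  assert (hs : 0 < s).
  { unfold s, splus. apply Rdiv_lt_0_compat.
    - apply Rplus_lt_le_0_compat; [apply pow_lt; lra | apply sqrt_pos].
    - apply Rmult_lt_0_compat; [lra | apply pow_lt; lra]. }
  assert (hmu : 0 < mu a b c) by (unfold mu; fold s; apply Rmult_lt_0_compat; [apply pow_lt; lra | lra]).
  assert (hnu : 0 < nu a b c) by (unfold nu; fold s; pose proof (pow_lt b 2 hb); pose proof (pow_lt a 2 ha); nra).
  destruct hC1 as [hn1 _].
  destruct hconf as [sg [hsg hd]].
  assert (P : forall x y, Omega x y ->
     rho0 x y 0%nat = 0 /\ rho0 x y 1%nat = 0 /\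
     rho0 x y 2%nat = - (sqrt 6 * s * gradnorm2 (d1n0 x y) (d2n0 x y)) / nu a b c /\
     exists u v, n0 x y 0%nat = 2*u/(1+u^2+v^2) /\ n0 x y 1%nat = 2*v/(1+u^2+v^2) /\
      n0 x y 2%nat = (1-u^2-v^2)/(1+u^2+v^2)).
  { intros x y hxy.
    destruct (stereo (n0 x y) (hn1 x y hxy) (hne x y hxy)) as (u & v & hx & hy & hz).
    pose proof (frobF 0 ltac:(lia) (n0 x y) (d1n0 x y) (d2n0 x y) u v sg hx hy hz hsg (hd x y hxy)) as F0.
    pose proof (frobF 1 ltac:(lia) (n0 x y) (d1n0 x y) (d2n0 x y) u v sg hx hy hz hsg (hd x y hxy)) as F1'.
    change (Fj 0%nat) with F1 in F0. change (Fj 1%nat) with F2 in F1'.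
    pose proof (hrho x y hxy 0%nat ltac:(lia)) as e0.
    pose proof (hrho x y hxy 1%nat ltac:(lia)) as e1'.
    pose proof (hrho x y hxy 2%nat ltac:(lia)) as e2'.
    cbv [b0vec] in e0, e1', e2'. fold s in e0, e1', e2'.
    rewrite F0 in e0. rewrite F1' in e1'.
    cbv [mvec sum3 B0 Nat.eqb] in e0, e1', e2'.
    split; [|split; [|split]].
    - apply (Rmult_eq_reg_l (mu a b c)); [|lra]. lra.
    - apply (Rmult_eq_reg_l (mu a b c)); [|lra]. lra.
    - apply (Rmult_eq_reg_l (nu a b c)); [|lra]. field_simplify; [lra|lra].
    - exists u, v; auto. }
  split.
  - intros x y hxy. destruct (P x y hxy) as (h0 & h1 & _ & u & v & hx & hy & hz).
    split; [auto|split; [auto|]].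
    exists (rho0 x y 2%nat * sqrt (3/2)).
    apply (Vrho_lem (n0 x y) (rho0 x y) u v hx hy hz h0 h1).
  - destruct hI as [hloc hhom].
    rewrite <- (proj2 (hhom _ _ hL4)).
    refine (proj2 (hloc _ _ _)).
    intros x y hxy. destruct (P x y hxy) as (h0 & h1 & h2 & _).
    cbv [vdot sum3 mvec B0 Nat.eqb]. cbv [b0vec]. fold s.
    rewrite h0, h1, h2.
    assert (sqrt 6 * sqrt 6 = 6) by (apply sqrt_sqrt; lra).
    set (g := gradnorm2 (d1n0 x y) (d2n0 x y)).
    field_simplify; [|lra..].
    rewrite pow2_sqrt by lra. field. lra.
Qed.
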